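(* Let $\mathcal{X}$ be a finite set, $\mathcal{Y}=\{-1,1\}$, and $P_{X,Y}$ the empirical distribution of $n$ samples $\{(x_i,y_i)\}_{i=1}^n$ with $P_Y(-1)=P_Y(1)=\frac12$. Let $f:\mathcal{X}\to\mathbb{R}^d$ and $\lambda>0$. Define $\tilde L_{\mathsf{SVM}}(f;\lambda) = 1-\frac{1}{2\lambda}\left\|\mathbb{E}[f(X)Y]\right\|^2$, $M = \max_{x\in\mathcal{X}}\|\tilde f(x)\|$ with $\tilde f(x)=f(x)-\mathbb{E}[f(X)]$, and $\lambda_{\mathrm T} = M\left\|\mathbb{E}[f(X)Y]\right\|$. Then $$\tilde L_{\mathsf{SVM}}(f;\lambda)\le L^*_{\mathsf{SVM}}(f;\lambda)\le \tilde L_{\mathsf{SVM}}(f;\lambda) + \left(\frac{\lambda_{\mathrm T}}{\lambda}-1\right)^+ .$$ Moreover, when $\lambda\ge\lambda_{\mathrm T}$, $L^*_{\mathsf{SVM}}(f;\lambda) = \tilde L_{\mathsf{SVM}}(f;\lambda)$, which is achieved by $w_{\mathsf{SVM}} = \frac1\lambda\mathbb{E}[f(X)Y]$, $b_{\mathsf{SVM}} = -\langle w_{\mathsf{SVM}},\mathbb{E}[f(X)]\rangle$, and the resulting SVM prediction is $$\hat y_{\mathsf{SVM}}(x;f,\lambda) = \mathrm{sign}\left(\left\langle\mathbb{E}[\tilde f(X)Y],\tilde f(x)\right\rangle\right) = \arg\min_{y\in\mathcal{Y}}\left\|f(x)-\mathbb{E}[f(X)\mid Y=y]\right\|.$$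
   Context: Expectations are with respect to $P_{X,Y}$, where $P_{X,Y}(x,y)=\frac1n\sum_{i=1}^n\mathbb{1}\{x_i=x,y_i=y\}$. $x^+=\max\{0,x\}$. The hinge loss is $\ell_{\mathrm{hinge}}(y,z)=(1-yz)^+$. For $w\in\mathbb{R}^d$, $b\in\mathbb{R}$, the SVM loss is $L_{\mathsf{SVM}}(f,w,b;\lambda) = \mathbb{E}[\ell_{\mathrm{hinge}}(Y,\langle w,f(X)\rangle+b)] + \frac\lambda2\|w\|^2$; $(w_{\mathsf{SVM}},b_{\mathsf{SVM}})$ denotes a minimizer, $L^*_{\mathsf{SVM}}(f;\lambda)$ the minimum value, and the SVM prediction is $\hat y_{\mathsf{SVM}}(x;f,\lambda) = \mathrm{sign}(\langle w_{\mathsf{SVM}},f(x)\rangle + b_{\mathsf{SVM}})$. *)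

(* Defs.v *)
From HB Require Import structures.
From mathcomp Require Import all_boot all_order all_algebra.
From mathcomp Require Import all_classical all_reals.
Set Implicit Arguments. Unset Strict Implicit. Unset Printing Implicit Defensive.
Import Order.TTheory GRing.Theory Num.Theory.
Local Open Scope ring_scope.
Local Open Scope classical_set_scope.

Section SVM.
Variable R : realType.
Variable X : finType.
Variables n d : nat.
Variable xs : 'I_n -> X.
Variable ys : 'I_n -> R.
Variable f : X -> 'rV[R]_d.

Definition dotv (u v : 'rV[R]_d) : R := \sum_(k < d) u 0 k * v 0 k.
Definition normv (u : 'rV[R]_d) : R := Num.sqrt (dotv u u).

Definition Exp (g : X -> R -> R) : R := n%:R^-1 * \sum_(i < n) g (xs i) (ys i).
Definition ExpV (g : X -> R -> 'rV[R]_d) : 'rV[R]_d :=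
  n%:R^-1 *: \sum_(i < n) g (xs i) (ys i).

Definition PY (y : R) : R := n%:R^-1 * #|[set i : 'I_n | ys i == y]|%:R.

Definition condExpf (y : R) : 'rV[R]_d :=
  #|[set i : 'I_n | ys i == y]|%:R^-1 *: \sum_(i < n | ys i == y) f (xs i).

Definition Ef : 'rV[R]_d := ExpV (fun x _ => f x).
Definition ftilde (x : X) : 'rV[R]_d := f x - Ef.

Definition EfY : 'rV[R]_d := ExpV (fun x y => y *: f x).
Definition EftY : 'rV[R]_d := ExpV (fun x y => y *: ftilde x).

Definition hinge (y z : R) : R := Num.max 0 (1 - y * z).

Definition L_SVM (lambda : R) (w : 'rV[R]_d) (b : R) : R :=
  Exp (fun x y => hinge y (dotv w (f x) + b)) + lambda / 2 * normv w ^+ 2.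

Definition Lstar_SVM (lambda : R) : R :=
  inf (range (fun wb : 'rV[R]_d * R => L_SVM lambda wb.1 wb.2)).

Definition Ltilde_SVM (lambda : R) : R := 1 - (2 * lambda)^-1 * normv EfY ^+ 2.

Definition Mmax : R := \big[Num.max/0]_(x : X) normv (ftilde x).
Definition lambdaT : R := Mmax * normv EfY.

Definition yhat (w : 'rV[R]_d) (b : R) (x : X) : R := Num.sg (dotv w (f x) + b).

Definition unique_argmin_Y (x : X) (y : R) : Prop :=
  (y = 1 \/ y = -1) /\
  forall y', (y' = 1 \/ y' = -1) -> y' <> y ->
    normv (f x - condExpf y) < normv (f x - condExpf y').

End SVM.

(* Main.v *)
Require Import Defs.
From HB Require Import structures.
From mathcomp Require Import all_boot all_order all_algebra.
From mathcomp Require Import all_classical all_reals.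
From mathcomp Require Import ring lra.
Import Order.TTheory GRing.Theory Num.Theory.
Local Open Scope ring_scope.

Lemma dotvC {R : realType} {d : nat} (u v : 'rV[R]_d) : dotv u v = dotv v u.
Proof. by apply: eq_bigr => k _; rewrite mulrC. Qed.

Lemma dotvDr {R : realType} {d : nat} (u v w : 'rV[R]_d) : dotv u (v + w) = dotv u v + dotv u w.
Proof. by rewrite /dotv -big_split; apply: eq_bigr => k _; rewrite mxE mulrDr. Qed.

Lemma dotvBr {R : realType} {d : nat} (u v w : 'rV[R]_d) : dotv u (v - w) = dotv u v - dotv u w.
Proof. by rewrite /dotv -sumrB; apply: eq_bigr => k _; rewrite !mxE mulrBr. Qed.

Lemma dotvZr {R : realType} {d : nat} (u v : 'rV[R]_d) c : dotv u (c *: v) = c * dotv u v.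
Proof. by rewrite /dotv mulr_sumr; apply: eq_bigr => k _; rewrite mxE mulrCA. Qed.

Lemma dotvZl {R : realType} {d : nat} (u v : 'rV[R]_d) c : dotv (c *: u) v = c * dotv u v.
Proof. by rewrite dotvC dotvZr dotvC. Qed.

Lemma dotv_sumr {R : realType} {d : nat} (u : 'rV[R]_d) I (r : seq I) (P : pred I) (F : I -> 'rV[R]_d) :
  dotv u (\sum_(i <- r | P i) F i) = \sum_(i <- r | P i) dotv u (F i).
Proof.
elim/big_rec2: _ => [|i y1 y2 _ <-]; last by rewrite dotvDr.
by rewrite /dotv big1 // => k _; rewrite mxE mulr0.
Qed.

Lemma dotv_ge0 {R : realType} {d : nat} (u : 'rV[R]_d) : 0 <= dotv u u.
Proof. by apply: sumr_ge0 => k _; rewrite -expr2 sqr_ge0. Qed.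

Lemma normv2 {R : realType} {d : nat} (u : 'rV[R]_d) : normv u ^+ 2 = dotv u u.
Proof. by rewrite /normv sqr_sqrtr // dotv_ge0. Qed.

Lemma normv_ge0 {R : realType} {d : nat} (u : 'rV[R]_d) : 0 <= normv u.
Proof. exact: sqrtr_ge0. Qed.

Lemma dotv0_eq {R : realType} {d : nat} (u v : 'rV[R]_d) : dotv u u = 0 -> dotv u v = 0.
Proof.
move=> h; have : \sum_(k < d) u 0 k * u 0 k == 0 by apply/eqP.
rewrite psumr_eq0; last by move=> k _; rewrite -expr2 sqr_ge0.
move/allP => H; rewrite /dotv big1 // => k _.
have := H k (mem_index_enum k); rewrite mulf_eq0 orbb => /eqP ->; by rewrite mul0r.
Qed.

Lemma cauchy_schwarz {R : realType} {d : nat} (u v : 'rV[R]_d) : dotv u v <= normv u * normv v.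
Proof.
set p := normv u; set q := normv v.
have hp : 0 <= p := normv_ge0 u. have hq : 0 <= q := normv_ge0 v.
have pp : p ^+ 2 = dotv u u := normv2 u. have qq : q ^+ 2 = dotv v v := normv2 v.
have key : p * q * dotv u v <= p ^+ 2 * q ^+ 2.
  have : 0 <= \sum_(k < d) (q * u 0 k - p * v 0 k) ^+ 2 by apply: sumr_ge0 => k _; rewrite sqr_ge0.
  have -> : \sum_(k < d) (q * u 0 k - p * v 0 k) ^+ 2 =
     q ^+ 2 * dotv u u - 2 * (p * q) * dotv u v + p ^+ 2 * dotv v v.
    rewrite /dotv !mulr_sumr -sumrB -big_split /=; apply: eq_bigr => k _; ring.
  rewrite -pp -qq => h; nra.
have [p0|pn0] := eqVneq p 0.
  by rewrite p0 mul0r (@dotv0_eq _ _ u v) // -pp p0 expr0n.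
have [q0|qn0] := eqVneq q 0.
  by rewrite q0 mulr0 dotvC (@dotv0_eq _ _ v u) // -qq q0 expr0n.
have hpq : 0 < p * q by rewrite mulr_gt0 // lt0r ?pn0 ?qn0.
rewrite -(ler_pM2l hpq); rewrite (le_trans key) //; rewrite le_eqVlt; apply/orP; left; apply/eqP; ring.
Qed.


Lemma one_neq_m1 {R : realType} : ((1 : R) == -1) = false.
Proof. by apply/negbTE/eqP => h; lra. Qed.

Lemma sum_split {R : realType} {n : nat} (ys : 'I_n -> R) (V : zmodType) (h : 'I_n -> V) :
  (forall i, ys i = 1 \/ ys i = -1) ->
  \sum_i h i = \sum_(i | ys i == 1) h i + \sum_(i | ys i == -1) h i.
Proof.
move=> hy; rewrite (bigID (fun i => ys i == 1)) /=; congr (_ + _).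
apply: eq_bigl => i; case: (hy i) => ->; rewrite ?eqxx ?one_neq_m1 //.
by rewrite eq_sym one_neq_m1.
Qed.

Lemma sum_splitY {R : realType} {n d : nat} (ys : 'I_n -> R) (h : 'I_n -> 'rV[R]_d) :
  (forall i, ys i = 1 \/ ys i = -1) ->
  \sum_i ys i *: h i = \sum_(i | ys i == 1) h i - \sum_(i | ys i == -1) h i.
Proof.
move=> hy; rewrite (sum_split _ _ _ hy); congr (_ + _).
  by apply: eq_bigr => i /eqP ->; rewrite scale1r.
by rewrite -sumrN; apply: eq_bigr => i /eqP ->; rewrite scaleN1r.
Qed.

Lemma counts {R : realType} {n : nat} (ys : 'I_n -> R) :
  (forall i, ys i = 1 \/ ys i = -1) ->
  PY ys 1 = 1 / 2 -> PY ys (-1) = 1 / 2 ->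
  [/\ (n%:R : R) != 0, #|[set i | ys i == 1]%classic|%:R = (n%:R : R) / 2,
      #|[set i | ys i == -1]%classic|%:R = (n%:R : R) / 2 & \sum_i ys i = 0].
Proof.
move=> hy; rewrite /PY => h1 h2.
have hn : (n%:R : R) != 0.
  apply/eqP => h0; move: h1; rewrite h0 invr0 mul0r => h; lra.
have c1 : #|[set i | ys i == 1]%classic|%:R = (n%:R : R) / 2.
  by rewrite -[LHS](mulVKf hn) h1 mul1r mulrC.
have c2 : #|[set i | ys i == -1]%classic|%:R = (n%:R : R) / 2.
  by rewrite -[LHS](mulVKf hn) h2 mul1r mulrC.
split => //.
rewrite (sum_split _ _ _ hy).
have -> : \sum_(i | ys i == 1) ys i = \sum_(i in [set i | ys i == 1]%classic) 1.
  by apply: eq_big => [i|i /eqP ->] //; apply/idP/idP => [h|/set_mem //]; exact: mem_set.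
have -> : \sum_(i | ys i == -1) ys i = \sum_(i in [set i | ys i == -1]%classic) (-1).
  by apply: eq_big => [i|i /eqP ->] //; apply/idP/idP => [h|/set_mem //]; exact: mem_set.
by rewrite !sumr_const -[(-1) *+ _]mulr_natr mulN1r c1 c2 addrN.
Qed.


Lemma EftY_eq {R : realType} {X : finType} {n d : nat} (xs : 'I_n -> X) (ys : 'I_n -> R)
  (f : X -> 'rV[R]_d) : \sum_i ys i = 0 -> EftY xs ys f = EfY xs ys f.
Proof.
move=> hs; rewrite /EftY /EfY /ExpV /ftilde; congr (_ *: _).
under eq_bigr do rewrite scalerBr.
by rewrite sumrB -scaler_suml hs scale0r subr0.
Qed.

Lemma dot_EfY {R : realType} {X : finType} {n d : nat} (xs : 'I_n -> X) (ys : 'I_n -> R)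
  (f : X -> 'rV[R]_d) w :
  dotv w (EfY xs ys f) = n%:R^-1 * \sum_i ys i * dotv w (f (xs i)).
Proof.
rewrite /EfY /ExpV dotvZr dotv_sumr; congr (_ * _); apply: eq_bigr => i _.
by rewrite dotvZr.
Qed.

Lemma quad_bound {R : realType} {d : nat} (w a : 'rV[R]_d) (l : R) : 0 < l ->
  dotv w a <= l / 2 * dotv w w + (2 * l)^-1 * dotv a a.
Proof.
move=> hl.
have h : 0 <= \sum_(k < d) (l * w 0 k - a 0 k) ^+ 2 by apply: sumr_ge0 => k _; rewrite sqr_ge0.
have e : \sum_(k < d) (l * w 0 k - a 0 k) ^+ 2 = l ^+ 2 * dotv w w - 2 * l * dotv w a + dotv a a.
  rewrite /dotv !mulr_sumr -sumrB -big_split /=; apply: eq_bigr => k _; ring.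
rewrite -subr_ge0.
have -> : l / 2 * dotv w w + (2 * l)^-1 * dotv a a - dotv w a =
   (l ^+ 2 * dotv w w - 2 * l * dotv w a + dotv a a) / (2 * l).
  by field; rewrite gt_eqF.
by rewrite divr_ge0 // -?e // mulr_ge0 // ltW.
Qed.

Lemma lower_bound {R : realType} {X : finType} {n d : nat} (xs : 'I_n -> X) (ys : 'I_n -> R)
  (f : X -> 'rV[R]_d) (l : R) w b :
  (n%:R : R) != 0 -> \sum_i ys i = 0 -> 0 < l ->
  Ltilde_SVM xs ys f l <= L_SVM xs ys f l w b.
Proof.
move=> hn hs hl.
have hE : 1 - dotv w (EfY xs ys f) <= Exp xs ys (fun x y => hinge y (dotv w (f x) + b)).
  rewrite /Exp dot_EfY.
  have -> : 1 - n%:R^-1 * \sum_i ys i * dotv w (f (xs i)) =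
     n%:R^-1 * \sum_i (1 - ys i * (dotv w (f (xs i)) + b)).
    rewrite sumrB sumr_const card_ord.
    under [X in _ = _ * (_ - X)]eq_bigr do rewrite mulrDr.
    rewrite big_split /= -mulr_suml hs mul0r addr0 mulrBr.
    by rewrite mulVf.
  rewrite ler_wpM2l ?invr_ge0 ?ler0n //; apply: ler_sum => i _.
  by rewrite /hinge le_max lexx orbT.
rewrite /L_SVM /Ltilde_SVM normv2 normv2.
have := @quad_bound _ _ w (EfY xs ys f) l hl; lra.
Qed.


Lemma normvZ {R : realType} {d : nat} (c : R) (u : 'rV[R]_d) : normv (c *: u) = `|c| * normv u.
Proof.
rewrite /normv dotvZl dotvZr mulrA -expr2 sqrtrM ?sqr_ge0 //.
by rewrite sqrtr_sqr.
Qed.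

Lemma le_Mmax {R : realType} {X : finType} {n d : nat} (xs : 'I_n -> X) (ys : 'I_n -> R)
  (f : X -> 'rV[R]_d) x : normv (ftilde xs ys f x) <= Mmax xs ys f.
Proof. rewrite /Mmax. exact: le_bigmax. Qed.

Lemma dot_EftY {R : realType} {X : finType} {n d : nat} (xs : 'I_n -> X) (ys : 'I_n -> R)
  (f : X -> 'rV[R]_d) w :
  dotv w (EftY xs ys f) = n%:R^-1 * \sum_i ys i * dotv w (ftilde xs ys f (xs i)).
Proof.
rewrite /EftY /ExpV dotvZr dotv_sumr; congr (_ * _); apply: eq_bigr => i _.
by rewrite dotvZr.
Qed.

Lemma upper_bound {R : realType} {X : finType} {n d : nat} (xs : 'I_n -> X) (ys : 'I_n -> R)
  (f : X -> 'rV[R]_d) (l : R) :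
  (forall i, ys i = 1 \/ ys i = -1) ->
  (n%:R : R) != 0 -> \sum_i ys i = 0 -> 0 < l ->
  L_SVM xs ys f l (l^-1 *: EfY xs ys f) (- dotv (l^-1 *: EfY xs ys f) (Ef xs ys f)) <= Ltilde_SVM xs ys f l + Num.max 0 (lambdaT xs ys f / l - 1).
Proof.
move=> hy hn hs hl; set w := l^-1 *: EfY xs ys f; set b := - dotv w _.
set a := EfY xs ys f; set c := Num.max 0 (lambdaT xs ys f / l - 1).
have c0 : 0 <= c by rewrite le_max lexx.
have c1 : lambdaT xs ys f / l - 1 <= c by rewrite le_max lexx orbT.
have hz x : dotv w (f x) + b = dotv w (ftilde xs ys f x) by rewrite /ftilde dotvBr.
have hw : normv w = l^-1 * normv a by rewrite normvZ ger0_norm // invr_ge0 ltW.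
have hb i : ys i * dotv w (ftilde xs ys f (xs i)) <= lambdaT xs ys f / l.
  set g := ftilde xs ys f (xs i).
  have : ys i * dotv w g <= normv w * normv g.
    case: (hy i) => ->; first by rewrite mul1r cauchy_schwarz.
    have -> : -1 * dotv w g = dotv w ((-1) *: g) by rewrite dotvZr.
    by apply: (le_trans (cauchy_schwarz _ _)); rewrite [normv (_ *: g)]normvZ normrN1 mul1r.
  move/le_trans; apply.
  rewrite hw /lambdaT -/a -/g; have hg := le_Mmax xs ys f (xs i); have ha := normv_ge0 a; have hli : 0 < l^-1 by rewrite invr_gt0.
  rewrite [_ / l]mulrC mulrA -!mulrA; apply: ler_wpM2l; first exact: ltW.
  rewrite [normv a * _]mulrC; exact: ler_wpM2r.
have hE : Exp xs ys (fun x y => hinge y (dotv w (f x) + b)) <=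
          1 + c - dotv w (EftY xs ys f).
  rewrite /Exp dot_EftY.
  have -> : 1 + c - n%:R^-1 * \sum_i ys i * dotv w (ftilde xs ys f (xs i)) =
     n%:R^-1 * \sum_i (1 + c - ys i * dotv w (ftilde xs ys f (xs i))).
    rewrite sumrB sumr_const card_ord mulrBr.
    by rewrite -[(1 + c) *+ _]mulr_natr mulrCA mulVf // mulr1.
  rewrite ler_wpM2l ?invr_ge0 ?ler0n //; apply: ler_sum => i _.
  rewrite hz /hinge ge_max; have hbi := hb i; apply/andP; split; lra.
rewrite /L_SVM /Ltilde_SVM normv2 normv2 -/a.
have -> : dotv w w = l^-1 * l^-1 * dotv a a by rewrite dotvZl dotvZr mulrA.
move: hE; rewrite (EftY_eq xs ys f hs) -/a.
have -> : dotv w a = l^-1 * dotv a a by rewrite dotvZl.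
move=> hE.
have e : l / 2 * (l^-1 * l^-1 * dotv a a) = (2 * l)^-1 * dotv a a.
  by field; rewrite gt_eqF.
lra.
Qed.


Lemma normv_lt {R : realType} {d : nat} (u v : 'rV[R]_d) :
  (normv u < normv v) <-> (dotv u u < dotv v v).
Proof.
have hu := dotv_ge0 u; have hv := dotv_ge0 v.
have [v0|vp] := eqVneq (dotv v v) 0.
  rewrite /normv v0 sqrtr0; split => h.
    by have := sqrtr_ge0 (dotv u u); lra.
  lra.
by rewrite /normv ltr_sqrt // lt0r vp hv.
Qed.

Lemma condExp_pm {R : realType} {X : finType} {n d : nat} (xs : 'I_n -> X) (ys : 'I_n -> R)
  (f : X -> 'rV[R]_d) :
  (forall i, ys i = 1 \/ ys i = -1) ->
  (n%:R : R) != 0 ->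
  #|[set i | ys i == 1]%classic|%:R = (n%:R : R) / 2 ->
  #|[set i | ys i == -1]%classic|%:R = (n%:R : R) / 2 ->
  condExpf xs ys f 1 = Ef xs ys f + EfY xs ys f /\
  condExpf xs ys f (-1) = Ef xs ys f - EfY xs ys f.
Proof.
move=> hy hn c1 c2.
have eEf : Ef xs ys f = n%:R^-1 *: (\sum_(i | ys i == 1) f (xs i) + \sum_(i | ys i == -1) f (xs i)).
  by rewrite /Ef /ExpV (sum_split _ _ (fun i => f (xs i)) hy).
have eEfY : EfY xs ys f = n%:R^-1 *: (\sum_(i | ys i == 1) f (xs i) - \sum_(i | ys i == -1) f (xs i)).
  by rewrite /EfY /ExpV (sum_splitY _ (fun i => f (xs i)) hy).
rewrite /condExpf eEf eEfY c1 c2.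
split; apply/rowP => k; rewrite !mxE; field; rewrite hn //.
Qed.


Lemma sg_eq1 {R : realType} (D : R) : (Num.sg D = 1) <-> 0 < D.
Proof.
case: (ltrgtP D 0) => h.
- by rewrite ltr0_sg //; split => hh; lra.
- by rewrite gtr0_sg //; split => hh; lra.
- by rewrite h sgr0; split => hh; lra.
Qed.

Lemma sg_eqm1 {R : realType} (D : R) : (Num.sg D = -1) <-> D < 0.
Proof.
case: (ltrgtP D 0) => h.
- by rewrite ltr0_sg //; split => hh; lra.
- by rewrite gtr0_sg //; split => hh; lra.
- by rewrite h sgr0; split => hh; lra.
Qed.

Theorem theorem1 (R : realType) (X : finType) (n d : nat)
  (xs : 'I_n -> X) (ys : 'I_n -> R) (f : X -> 'rV[R]_d) (lambda : R) :
  (forall i, ys i = 1 \/ ys i = -1) ->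
  PY ys 1 = 1 / 2 -> PY ys (-1) = 1 / 2 ->
  0 < lambda ->
  let Lt := Ltilde_SVM xs ys f lambda in
  let Ls := Lstar_SVM xs ys f lambda in
  let lT := lambdaT xs ys f in
  (Lt <= Ls /\ Ls <= Lt + Num.max 0 (lT / lambda - 1)) /\
  (lT <= lambda ->
    let w := lambda^-1 *: EfY xs ys f in
    let b := - dotv w (Ef xs ys f) in
    Ls = Lt /\ L_SVM xs ys f lambda w b = Lt /\
    forall x : X,
      yhat f w b x = Num.sg (dotv (EftY xs ys f) (ftilde xs ys f x)) /\
      (forall y : R, y = 1 \/ y = -1 ->
         (yhat f w b x = y <-> unique_argmin_Y xs ys f x y))).
Proof.
move=> hy h1 hm1 hl Lt Ls lT.
have [hn c1 c2 hs] := counts ys hy h1 hm1.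
have hup := upper_bound xs ys f lambda hy hn hs hl.
set w0 := lambda^-1 *: EfY xs ys f in hup.
set b0 := - dotv w0 (Ef xs ys f) in hup.
have hlow : forall w b, Lt <= L_SVM xs ys f lambda w b.
  by move=> w b; exact: lower_bound.
have hLsge : Lt <= Ls.
  apply: lb_le_inf; first by exists (L_SVM xs ys f lambda w0 b0); exists (w0, b0).
  by move=> _ [wb _ <-]; exact: hlow.
have hLsle : Ls <= L_SVM xs ys f lambda w0 b0.
  apply: ge_inf; last by exists (w0, b0).
  by exists Lt => _ [wb _ <-]; exact: hlow.
split; first by split => //; exact: le_trans hLsle hup.
move=> hlT w b.
have c0 : Num.max 0 (lT / lambda - 1) = 0.
  apply/max_idPl; rewrite subr_le0 ler_pdivrMr // mul1r //.
rewrite c0 addr0 in hup.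
have eL : L_SVM xs ys f lambda w b = Lt by apply/le_anti; rewrite hup hlow.
split; first by apply/le_anti; rewrite hLsge andbT -eL.
split => // x.
set a := EfY xs ys f.
set g := ftilde xs ys f x.
set D := dotv a g.
have hyhat : yhat f w b x = Num.sg D.
  rewrite /yhat /b -dotvBr /w dotvZl sgrM gtr0_sg ?invr_gt0 // mul1r.
  by rewrite /D /g /ftilde.
rewrite hyhat (EftY_eq xs ys f hs); split => //.
have [cp cm] := condExp_pm xs ys f hy hn c1 c2.
have e1 : f x - condExpf xs ys f 1 = g - a by rewrite cp /g /ftilde opprD addrA.
have e2 : f x - condExpf xs ys f (-1) = g + a by rewrite cm /g /ftilde opprB addrA addrAC.
have E : dotv (g + a) (g + a) - dotv (g - a) (g - a) = 4 * D.
  rewrite /D /dotv -sumrB mulr_sumr; apply: eq_bigr => k _; rewrite !mxE; ring.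
have nm : (-1 : R) <> 1 by move/eqP; rewrite eq_sym one_neq_m1.
have key1 : unique_argmin_Y xs ys f x 1 <-> 0 < D.
  split.
    case=> _ H; have := H (-1) (or_intror erefl) nm.
    by rewrite e1 e2 => /normv_lt; lra.
  move=> hD; split; first by left.
  move=> y' [->|->] hne //.
  by rewrite e1 e2; apply/normv_lt; lra.
have key2 : unique_argmin_Y xs ys f x (-1) <-> D < 0.
  split.
    case=> _ H; have := H 1 (or_introl erefl) (fun h => nm (esym h)).
    by rewrite e1 e2 => /normv_lt; lra.
  move=> hD; split; first by right.
  move=> y' [->|->] hne //.
  by rewrite e1 e2; apply/normv_lt; lra.
move=> y [->|->]; [rewrite key1; exact: sg_eq1 | rewrite key2; exact: sg_eqm1].
Qed.
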